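(* Let $m\in\mathbb Z\setminus\{0\}$, $\xi\in\mathbb Z_m$ and $\Gamma=\widetilde{BS}(m,\xi)$. Then for every automorphism $\varphi$ of $\Gamma$, the group $\Gamma$ has infinitely many $\varphi$-twisted conjugacy classes.
   Context: $\mathbb Z_m$ is the ring of $m$-adic integers. The functions $r_i$: $r_0(\xi)=0$, $s_0(\xi)=1$, and for $i\ge1$, $r_i(\xi)\in\{0,\dots,|m|-1\}$, $s_i(\xi)\in\mathbb Z_m$ unique with $\xi s_{i-1}(\xi)=ms_i(\xi)+r_i(\xi)$. Let $E$ be the free abelian group with basis $e_0,e_1,\dots$, $E_{m,\xi}\le E$ with basis $me_0,\ e_i-r_i(\xi)e_0$ ($i\ge1$), $E_1\le E$ with basis $e_1,e_2,\dots$, and $\phi:E_{m,\xi}\to E_1$ the isomorphism $\phi(me_0)=e_1$, $\phi(e_i-r_i(\xi)e_0)=e_{i+1}$. $\widetilde{BS}(m,\xi)=\langle E,a\mid axa^{-1}=\phi(x)\ \forall x\in E_{m,\xi}\rangle$. Two elements $\gamma,\gamma'$ of a group $G$ are $\varphi$-twisted conjugate ($\varphi\in\mathrm{Aut}(G)$) if $\gamma'=g\gamma\varphi(g)^{-1}$ for some $g\in G$; the classes of this equivalence relation are the $\varphi$-twisted conjugacy classes. *)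

(* Defs.v *)
From Stdlib Require Import ZArith List.
Import ListNotations.
Open Scope Z_scope.

(* ---------- m-adic integers ----------
   Z_m = inverse limit of Z / |m|^k Z.  An element is a compatible sequence
   of normalized residues x k in [0, |m|^k). *)
Record Zadic (m : Z) := {
  zres : nat -> Z;
  zres_range : forall k : nat, 0 <= zres k < Z.abs m ^ Z.of_nat k;
  zres_compat : forall k : nat, zres (S k) mod (Z.abs m ^ Z.of_nat k) = zres k
}.
Arguments zres {m} _ _.

Definition modk (m : Z) (k : nat) (z : Z) : Z := z mod (Z.abs m ^ Z.of_nat k).
Definition one_raw (m : Z) : nat -> Z := fun k => modk m k 1.
Definition mul_raw (m : Z) (x y : nat -> Z) : nat -> Z :=
  fun k => modk m k (x k * y k).
(* the digit r in {0,..,|m|-1} with y = m s + r : the residue of y mod |m| *)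
Definition digit_raw (m : Z) (y : nat -> Z) : Z := y 1%nat mod Z.abs m.
(* the unique s with y = m s + r (exact division, y - r divisible by m) *)
Definition divm_raw (m : Z) (y : nat -> Z) (r : Z) : nat -> Z :=
  fun k => modk m k ((y (S k) - r) / m).

(* (r_i(xi), s_i(xi)) : s_0 = 1, and xi * s_{i-1} = m s_i + r_i. *)
Fixpoint rs (m : Z) (xi : nat -> Z) (i : nat) : Z * (nat -> Z) :=
  match i with
  | O => (0, one_raw m)
  | S j => let y := mul_raw m xi (snd (rs m xi j)) in
           let r := digit_raw m y in (r, divm_raw m y r)
  end.

Definition rfun (m : Z) (xi : Zadic m) (i : nat) : Z := fst (rs m (zres xi) i).

Inductive gen : Type := Egen (i : nat) | Agen.
(* a letter is a generator with an exponent sign: false = g, true = g^-1 *)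
Definition letter : Type := (gen * bool)%type.
Definition word : Type := list letter.

Definition linv (l : letter) : letter := (fst l, negb (snd l)).
Definition winv (w : word) : word := rev (map linv w).

Definition epow (i : nat) (k : Z) : word :=
  if k <? 0 then repeat (Egen i, true) (Z.to_nat (- k))
  else repeat (Egen i, false) (Z.to_nat k).

(* For x = c_0 (m e_0) + sum_{j>=1} c_j (e_j - r_j e_0) in E_{m,xi},
   given by its coefficient list [c_0; c_1; ...; c_n] in that basis:
   a word for x, and a word for phi(x) = c_0 e_1 + sum_j c_j e_{j+1}. *)
Fixpoint xw_aux (r : nat -> Z) (j : nat) (cs : list Z) : word :=
  match cs with
  | [] => []
  | c :: cs' => epow j c ++ epow 0 (- (r j) * c) ++ xw_aux r (S j) cs'
  end.
Definition xword (m : Z) (r : nat -> Z) (cs : list Z) : word :=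
  match cs with
  | [] => []
  | c0 :: cs' => epow 0 (m * c0) ++ xw_aux r 1 cs'
  end.
Fixpoint phw_aux (j : nat) (cs : list Z) : word :=
  match cs with
  | [] => []
  | c :: cs' => epow (S j) c ++ phw_aux (S j) cs'
  end.
Definition phiword (cs : list Z) : word :=
  match cs with
  | [] => []
  | c0 :: cs' => epow 1 c0 ++ phw_aux 1 cs'
  end.

(* Equality in BS~(m, xi): the congruence on words generated by free
   cancellation, commutativity of E (free abelian on e_0, e_1, ...), and
   a x a^-1 = phi(x) for all x in E_{m,xi}. *)
Inductive bs_eq (m : Z) (r : nat -> Z) : word -> word -> Prop :=
  | bs_refl : forall u, bs_eq m r u u
  | bs_sym : forall u v, bs_eq m r u v -> bs_eq m r v u
  | bs_trans : forall u v w, bs_eq m r u v -> bs_eq m r v w -> bs_eq m r u w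
  | bs_ctx : forall p u v q, bs_eq m r u v -> bs_eq m r (p ++ u ++ q) (p ++ v ++ q)
  | bs_free : forall l : letter, bs_eq m r [l; linv l] []
  | bs_comm : forall i j : nat,
      bs_eq m r [(Egen i, false); (Egen j, false)] [(Egen j, false); (Egen i, false)]
  | bs_hnn : forall cs : list Z,
      bs_eq m r ([(Agen, false)] ++ xword m r cs ++ [(Agen, true)]) (phiword cs).

Definition BSeq (m : Z) (xi : Zadic m) : word -> word -> Prop := bs_eq m (rfun m xi).

Record is_aut (m : Z) (xi : Zadic m) (f : word -> word) : Prop := {
  aut_wd : forall u v, BSeq m xi u v -> BSeq m xi (f u) (f v);
  aut_hom : forall u v, BSeq m xi (f (u ++ v)) (f u ++ f v);
  aut_inj : forall u v, BSeq m xi (f u) (f v) -> BSeq m xi u v;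
  aut_surj : forall v, exists u, BSeq m xi (f u) v
}.

Definition twisted_conj (m : Z) (xi : Zadic m) (f : word -> word)
  (gamma gamma' : word) : Prop :=
  exists g : word, BSeq m xi gamma' (g ++ gamma ++ winv (f g)).

(* Main.v *)
Require Import Defs.
From Stdlib Require Import ZArith List Reals Lra Lia Classical.
Import ListNotations.
Open Scope Z_scope.

Definition c4 (k : Z) : Z := match k mod 4 with 0 => 1 | 1 => 0 | 2 => -1 | _ => 0 end.
Definition s4 (k : Z) : Z := match k mod 4 with 0 => 0 | 1 => 1 | 2 => 0 | _ => -1 end.
Definition Sa (k : Z) : Z := match k mod 4 with 0 => 0 | 1 => 1 | 2 => 1 | _ => 0 end.
Definition Sb (k : Z) : Z := match k mod 4 with 0 => 0 | 1 => 0 | 2 => -1 | _ => -1 end.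

Lemma mod4_cases k : k mod 4 = 0 \/ k mod 4 = 1 \/ k mod 4 = 2 \/ k mod 4 = 3.
Proof. pose proof (Z.mod_pos_bound k 4). lia. Qed.

Ltac m4 k1 k2 :=
  rewrite ?(Zplus_mod k1 k2);
  destruct (mod4_cases k1) as [H1|[H1|[H1|H1]]];
  destruct (mod4_cases k2) as [H2|[H2|[H2|H2]]]; rewrite ?H1, ?H2; reflexivity.

Lemma c4_add k1 k2 : c4 (k1+k2) = c4 k1 * c4 k2 - s4 k1 * s4 k2.
Proof. unfold c4, s4. m4 k1 k2. Qed.
Lemma s4_add k1 k2 : s4 (k1+k2) = s4 k1 * c4 k2 + c4 k1 * s4 k2.
Proof. unfold c4, s4. m4 k1 k2. Qed.
Lemma Sa_add k1 k2 : Sa (k1+k2) = Sa k1 + c4 k1 * Sa k2 + s4 k1 * Sb k2.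
Proof. unfold c4, s4, Sa, Sb. m4 k1 k2. Qed.
Lemma Sb_add k1 k2 : Sb (k1+k2) = Sb k1 + c4 k1 * Sb k2 - s4 k1 * Sa k2.
Proof. unfold c4, s4, Sa, Sb. m4 k1 k2. Qed.
Lemma c4_opp k : c4 (-k) = c4 k.
Proof. unfold c4. replace (-k) with (0 - k) by ring. rewrite Zminus_mod.
  destruct (mod4_cases k) as [H1|[H1|[H1|H1]]]; rewrite ?H1; reflexivity. Qed.
Lemma s4_opp k : s4 (-k) = - s4 k.
Proof. unfold s4. replace (-k) with (0 - k) by ring. rewrite Zminus_mod.
  destruct (mod4_cases k) as [H1|[H1|[H1|H1]]]; rewrite ?H1; reflexivity. Qed.
Lemma c4_0 : c4 0 = 1. Proof. reflexivity. Qed.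
Lemma s4_0 : s4 0 = 0. Proof. reflexivity. Qed.
Lemma c4_1 : c4 1 = 0. Proof. reflexivity. Qed.
Lemma s4_1 : s4 1 = 1. Proof. reflexivity. Qed.
Lemma c4_m1 : c4 (-1) = 0. Proof. reflexivity. Qed.
Lemma s4_m1 : s4 (-1) = -1. Proof. reflexivity. Qed.
Lemma Sa_0 : Sa 0 = 0. Proof. reflexivity. Qed.
Lemma Sb_0 : Sb 0 = 0. Proof. reflexivity. Qed.
Lemma Sa_1 : Sa 1 = 1. Proof. reflexivity. Qed.
Lemma Sb_1 : Sb 1 = 0. Proof. reflexivity. Qed.

Definition roty k y z := c4 k * y - s4 k * z.
Definition rotz k y z := s4 k * y + c4 k * z.
Lemma roty_comp k k' y z : roty k (roty k' y z) (rotz k' y z) = roty (k + k') y z.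
Proof. unfold roty, rotz. rewrite c4_add, s4_add. ring. Qed.
Lemma rotz_comp k k' y z : rotz k (roty k' y z) (rotz k' y z) = rotz (k + k') y z.
Proof. unfold roty, rotz. rewrite c4_add, s4_add. ring. Qed.

Definition p2 (k : Z) : R := powerRZ 2 k.
Lemma p2_add a b : p2 (a + b) = (p2 a * p2 b)%R.
Proof. unfold p2. apply powerRZ_add. lra. Qed.
Lemma p2_0 : p2 0 = 1%R. Proof. reflexivity. Qed.
Lemma p2_1 : p2 1 = 2%R. Proof. unfold p2. simpl. ring. Qed.
Lemma p2_inv k : (p2 k * p2 (-k))%R = 1%R.
Proof. rewrite <- p2_add. rewrite Z.add_opp_diag_r. reflexivity. Qed.
Lemma p2_eq1 k : p2 k = 1%R -> k = 0.
Proof.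
  intro H. destruct k as [|p|p]; auto; exfalso.
  - unfold p2 in H. simpl in H. pose proof (Rlt_pow_R1 2 (Pos.to_nat p) ltac:(lra) ltac:(lia)). lra.
  - pose proof (p2_inv (Z.neg p)) as E. rewrite H in E. simpl in E.
    unfold p2 in E. simpl in E. pose proof (Rlt_pow_R1 2 (Pos.to_nat p) ltac:(lra) ltac:(lia)). lra.
Qed.

Arguments c4 : simpl never.
Arguments s4 : simpl never.
Arguments Sa : simpl never.
Arguments Sb : simpl never.
Arguments p2 : simpl never.
Arguments roty : simpl never.
Arguments rotz : simpl never.

Record G := mkG { gx : R; gy : Z; gz : Z; gk : Z }.
Definition one := mkG 0 0 0 0.
Definition mul g h := mkG (gx g + p2 (gk g) * gx h)%R (gy g + roty (gk g) (gy h) (gz h))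
  (gz g + rotz (gk g) (gy h) (gz h)) (gk g + gk h).
Definition inv g := mkG (- (p2 (- gk g) * gx g))%R (- roty (- gk g) (gy g) (gz g))
  (- rotz (- gk g) (gy g) (gz g)) (- gk g).

Lemma G_ext a b : gx a = gx b -> gy a = gy b -> gz a = gz b -> gk a = gk b -> a = b.
Proof. destruct a, b; simpl; intros; subst; reflexivity. Qed.

Lemma roty_lin k y z y' z' : roty k (y + y') (z + z') = roty k y z + roty k y' z'.
Proof. unfold roty; ring. Qed.
Lemma rotz_lin k y z y' z' : rotz k (y + y') (z + z') = rotz k y z + rotz k y' z'.
Proof. unfold rotz; ring. Qed.

Lemma mul_assoc a b c : mul a (mul b c) = mul (mul a b) c.
Proof. destruct a as [x1 y1 z1 k1], b as [x2 y2 z2 k2], c as [x3 y3 z3 k3].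
  unfold mul; simpl; apply G_ext; simpl.
  - rewrite p2_add; ring.
  - rewrite roty_lin, roty_comp. ring.
  - rewrite rotz_lin, rotz_comp. ring.
  - ring.
Qed.
Lemma roty_0 y z : roty 0 y z = y. Proof. unfold roty; rewrite c4_0, s4_0; ring. Qed.
Lemma rotz_0 y z : rotz 0 y z = z. Proof. unfold rotz; rewrite c4_0, s4_0; ring. Qed.
Lemma roty_00 k : roty k 0 0 = 0. Proof. unfold roty; ring. Qed.
Lemma rotz_00 k : rotz k 0 0 = 0. Proof. unfold rotz; ring. Qed.
Lemma roty_opp k y z : roty k (-y) (-z) = - roty k y z. Proof. unfold roty; ring. Qed.
Lemma rotz_opp k y z : rotz k (-y) (-z) = - rotz k y z. Proof. unfold rotz; ring. Qed.

Lemma mul_1_l a : mul one a = a.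
Proof. destruct a; unfold mul, one; apply G_ext; simpl; rewrite ?p2_0, ?roty_0, ?rotz_0; ring. Qed.
Lemma mul_1_r a : mul a one = a.
Proof. destruct a; unfold mul, one; apply G_ext; simpl; rewrite ?roty_00, ?rotz_00; ring. Qed.
Lemma mul_inv_l a : mul (inv a) a = one.
Proof. destruct a; unfold mul, inv, one; apply G_ext; simpl; ring. Qed.
Lemma mul_inv_r a : mul a (inv a) = one.
Proof. destruct a as [x y z k]; unfold mul, inv, one; apply G_ext; simpl.
  - pose proof (p2_inv k). transitivity (x * (1 - p2 k * p2 (-k)))%R; [ring| rewrite H; ring].
  - rewrite roty_opp, roty_comp, Z.add_opp_diag_r, roty_0. ring.
  - rewrite rotz_opp, rotz_comp, Z.add_opp_diag_r, rotz_0. ring.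
  - ring.
Qed.

Lemma inv_unique a b : mul a b = one -> b = inv a.
Proof. intro H. rewrite <- (mul_1_l b), <- (mul_inv_l a), <- mul_assoc, H, mul_1_r. reflexivity. Qed.
Lemma inv_inv a : inv (inv a) = a.
Proof. symmetry. apply inv_unique. apply mul_inv_l. Qed.
Lemma inv_mul a b : inv (mul a b) = mul (inv b) (inv a).
Proof. symmetry. apply inv_unique.
  rewrite <- mul_assoc, (mul_assoc b), mul_inv_r, mul_1_l, mul_inv_r. reflexivity. Qed.
Lemma inv_one : inv one = one.
Proof. symmetry; apply inv_unique; apply mul_1_l. Qed.


Record T3 := mk3 { ta : Z; tb : Z; tc : Z }.
Definition tadd s t := mk3 (ta s + ta t) (tb s + tb t) (tc s + tc t).
Definition tsc (c : Z) t := mk3 (c * ta t) (c * tb t) (c * tc t).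
Definition tmul t := mk3 (2 * ta t) (- tc t) (tb t).
Definition t0 := mk3 0 0 0.
Definition e3 := mk3 1 1 0.

Fixpoint PP (m : Z) (r : nat -> Z) (n : nat) : T3 :=
  match n with
  | O => e3
  | S j => tmul (match j with O => tsc m e3 | S _ => tadd (PP m r j) (tsc (- r j) e3) end)
  end.

Definition pure (t : T3) := mkG (IZR (ta t)) (tb t) (tc t) 0.
Definition gimg m r (g : gen) := match g with Egen i => pure (PP m r i) | Agen => mkG 0 0 0 1 end.
Definition img m r (l : letter) := if snd l then inv (gimg m r (fst l)) else gimg m r (fst l).
Fixpoint ev m r (w : word) : G := match w with [] => one | l :: w' => mul (img m r l) (ev m r w') end.

Lemma T3_ext a b : ta a = ta b -> tb a = tb b -> tc a = tc b -> a = b.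
Proof. destruct a, b; simpl; intros; subst; reflexivity. Qed.

Lemma ev_app m r u v : ev m r (u ++ v) = mul (ev m r u) (ev m r v).
Proof. induction u; simpl. - rewrite mul_1_l; auto. - rewrite IHu, mul_assoc; auto. Qed.

Lemma pure_mul s t : mul (pure s) (pure t) = pure (tadd s t).
Proof. unfold mul, pure, tadd; apply G_ext; simpl; rewrite ?p2_0, ?roty_0, ?rotz_0, ?plus_IZR; ring. Qed.
Lemma pure_inv t : inv (pure t) = pure (tsc (-1) t).
Proof. unfold inv, pure, tsc; apply G_ext; cbn [gx gy gz gk ta tb tc]; rewrite ?Z.opp_0, ?p2_0, ?roty_0, ?rotz_0, ?mult_IZR; try ring. Qed.
Lemma pure_0 : pure t0 = one. Proof. reflexivity. Qed.

Lemma ev_rep_pos m r i n : ev m r (repeat (Egen i, false) n) = pure (tsc (Z.of_nat n) (PP m r i)).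
Proof. induction n; simpl.
  - unfold pure, tsc; apply G_ext; simpl; auto.
  - rewrite IHn. change (img m r (Egen i, false)) with (pure (PP m r i)). rewrite pure_mul. f_equal. apply T3_ext; cbn [ta tb tc tadd tsc]; rewrite ?Zpos_P_of_succ_nat; unfold Z.succ; ring. Qed.
Lemma ev_rep_neg m r i n : ev m r (repeat (Egen i, true) n) = pure (tsc (- Z.of_nat n) (PP m r i)).
Proof. induction n; simpl.
  - unfold pure, tsc; apply G_ext; simpl; auto.
  - rewrite IHn. change (img m r (Egen i, true)) with (inv (pure (PP m r i))). rewrite pure_inv, pure_mul. f_equal. apply T3_ext; cbn [ta tb tc tadd tsc]; rewrite <- ?Pos2Z.opp_pos, ?Zpos_P_of_succ_nat; unfold Z.succ; ring. Qed.

Lemma ev_epow m r i c : ev m r (epow i c) = pure (tsc c (PP m r i)).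
Proof. unfold epow. destruct (c <? 0) eqn:E.
  - rewrite ev_rep_neg. f_equal. rewrite Z2Nat.id by lia. f_equal. lia.
  - rewrite ev_rep_pos. rewrite Z2Nat.id by lia. auto. Qed.

Fixpoint xa m r j cs : T3 := match cs with
  | [] => t0
  | c :: cs' => tadd (tadd (tsc c (PP m r j)) (tsc (- (r j) * c) (PP m r 0))) (xa m r (S j) cs') end.
Fixpoint pa m r j cs : T3 := match cs with
  | [] => t0
  | c :: cs' => tadd (tsc c (PP m r (S j))) (pa m r (S j) cs') end.

Lemma ev_xw m r j cs : ev m r (xw_aux r j cs) = pure (xa m r j cs).
Proof. revert j; induction cs; intro j; simpl; auto.
  rewrite !ev_app, !ev_epow, IHcs, !pure_mul. f_equal. apply T3_ext; simpl; ring. Qed.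
Lemma ev_phw m r j cs : ev m r (phw_aux j cs) = pure (pa m r j cs).
Proof. revert j; induction cs; intro j; simpl; auto.
  rewrite !ev_app, !ev_epow, IHcs, !pure_mul. auto. Qed.

Lemma tmul_xa m r j cs : (1 <= j)%nat -> tmul (xa m r j cs) = pa m r j cs.
Proof. revert j; induction cs; intros j Hj; simpl.
  - apply T3_ext; simpl; ring.
  - rewrite <- IHcs by lia. destruct j as [|j]; [lia|].
    change (PP m r (S (S j))) with (tmul (tadd (PP m r (S j)) (tsc (- r (S j)) e3))).
    change (PP m r 0) with e3. apply T3_ext; cbn [ta tb tc tadd tsc tmul e3]; ring. Qed.

Lemma ev_conj m r w t : ev m r w = pure t ->
  ev m r ([(Agen,false)] ++ w ++ [(Agen,true)]) = pure (tmul t).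
Proof. intro H. rewrite !ev_app, H. simpl. unfold img, gimg; simpl.
  unfold mul, inv, pure, one, tmul; apply G_ext; cbn [gx gy gz gk ta tb tc];
  rewrite ?Z.add_0_r, ?p2_1, ?p2_0, ?mult_IZR; unfold roty, rotz; rewrite ?c4_1, ?s4_1, ?c4_0, ?s4_0; ring.
Qed.

Lemma ev_hnn m r cs : ev m r ([(Agen, false)] ++ xword m r cs ++ [(Agen, true)]) = ev m r (phiword cs).
Proof. destruct cs as [|c0 cs].
  - simpl. unfold img, gimg; simpl. rewrite mul_1_r. apply mul_inv_r.
  - unfold xword, phiword. rewrite (ev_conj m r _ (tadd (tsc (m*c0) (PP m r 0)) (xa m r 1 cs))).
    + rewrite ev_app, ev_epow, ev_phw, pure_mul. f_equal.
      rewrite <- (tmul_xa m r 1 cs) by lia.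
      change (PP m r 1) with (tmul (tsc m e3)). change (PP m r 0) with e3.
      apply T3_ext; cbn [ta tb tc tadd tsc tmul e3]; ring.
    + rewrite ev_app, ev_epow, ev_xw, pure_mul. auto.
Qed.

Lemma img_linv m r l : img m r (linv l) = inv (img m r l).
Proof. destruct l as [g b]; destruct b; unfold img, linv; simpl; rewrite ?inv_inv; auto. Qed.

Lemma ev_resp m r u v : bs_eq m r u v -> ev m r u = ev m r v.
Proof. induction 1.
  - auto.
  - auto.
  - congruence.
  - rewrite !ev_app, IHbs_eq. auto.
  - simpl. rewrite img_linv, mul_1_r. apply mul_inv_r.
  - simpl. unfold img, gimg, pure; simpl. rewrite !mul_1_r.
    unfold mul; apply G_ext; simpl; rewrite ?p2_0, ?roty_0, ?rotz_0; ring.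
  - apply ev_hnn.
Qed.

Lemma ev_winv m r w : ev m r (winv w) = inv (ev m r w).
Proof. induction w as [|l w IH]; simpl.
  - symmetry; apply inv_one.
  - unfold winv in *. simpl. rewrite ev_app, IH. simpl. rewrite mul_1_r, img_linv, inv_mul. auto. Qed.


Definition Pi m (xi : Zadic m) w := ev m (rfun m xi) w.
Definition Hf m (xi : Zadic m) (f : word -> word) w := Pi m xi (f w).

Lemma Pi_wd m xi u v : BSeq m xi u v -> Pi m xi u = Pi m xi v.
Proof. apply ev_resp. Qed.
Lemma Pi_app m xi u v : Pi m xi (u ++ v) = mul (Pi m xi u) (Pi m xi v).
Proof. apply ev_app. Qed.


Lemma H_wd m xi f (hf : is_aut m xi f) u v : BSeq m xi u v -> Hf m xi f u = Hf m xi f v.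
Proof. intro H. apply Pi_wd. apply (aut_wd _ _ _ hf). auto. Qed.
Lemma H_app m xi f (hf : is_aut m xi f) u v : Hf m xi f (u ++ v) = mul (Hf m xi f u) (Hf m xi f v).
Proof. unfold Hf. rewrite <- Pi_app. apply Pi_wd. apply (aut_hom _ _ _ hf). Qed.
Lemma H_nil m xi f (hf : is_aut m xi f) : Hf m xi f [] = one.
Proof. pose proof (H_app m xi f hf [] []) as E. simpl in E.
  set (x := Hf m xi f []) in *.
  rewrite <- (mul_1_l x) at 1. rewrite <- (mul_inv_l x). rewrite <- mul_assoc, <- E, mul_inv_l. auto. Qed.
Lemma H_linv m xi f (hf : is_aut m xi f) l : Hf m xi f [linv l] = inv (Hf m xi f [l]).
Proof. apply inv_unique. rewrite <- H_app by auto. rewrite <- (H_nil m xi f hf).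
  apply H_wd; auto. apply bs_free. Qed.
Lemma H_cons m xi f (hf : is_aut m xi f) l w : Hf m xi f (l :: w) = mul (Hf m xi f [l]) (Hf m xi f w).
Proof. rewrite <- H_app by auto. auto. Qed.

Lemma H_ind m xi f (hf : is_aut m xi f) (P : G -> Prop) :
  P one -> (forall a b, P a -> P b -> P (mul a b)) ->
  forall w, (forall l, In l w -> P (Hf m xi f [l])) -> P (Hf m xi f w).
Proof. intros P1 Pm w. induction w as [|l w IH]; intro Hl.
  - rewrite H_nil; auto.
  - rewrite H_cons by auto. apply Pm; [apply Hl; left; auto| apply IH; intros; apply Hl; right; auto]. Qed.

Lemma H_ind_pos m xi f (hf : is_aut m xi f) (P : G -> Prop) :
  P one -> (forall a b, P a -> P b -> P (mul a b)) -> (forall a, P a -> P (inv a)) ->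
  forall w, (forall g, In (g,false) w \/ In (g,true) w -> P (Hf m xi f [(g,false)])) -> P (Hf m xi f w).
Proof. intros P1 Pm Pi' w Hw. apply H_ind; auto. intros [g b] Hin. destruct b.
  - change (g, true) with (linv (g, false)). rewrite H_linv by auto. apply Pi'. apply Hw; auto.
  - apply Hw; auto. Qed.

Lemma in_epow i n l : In l (epow i n) -> fst l = Egen i.
Proof. unfold epow. destruct (n <? 0); intro H; apply repeat_spec in H; subst; auto. Qed.

Lemma gk_H_rep m xi f (hf : is_aut m xi f) l n :
  gk (Hf m xi f (repeat l n)) = Z.of_nat n * gk (Hf m xi f [l]).
Proof. induction n; cbn [repeat]. - rewrite H_nil; auto. - rewrite H_cons by auto. cbn [gk mul]. rewrite IHn, Nat2Z.inj_succ. ring. Qed.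

Lemma gk_H_epow m xi f (hf : is_aut m xi f) i n :
  gk (Hf m xi f (epow i n)) = n * gk (Hf m xi f [(Egen i,false)]).
Proof. unfold epow. destruct (n <? 0) eqn:E; [apply Z.ltb_lt in E|apply Z.ltb_ge in E].
  - rewrite gk_H_rep by auto. change (Egen i, true) with (linv (Egen i, false)). rewrite H_linv by auto.
    cbn [gk inv]. unfold letter. rewrite Z2Nat.id by lia. ring.
  - rewrite gk_H_rep by auto. rewrite Z2Nat.id by lia. auto. Qed.

Lemma rel_e1 m xi : BSeq m xi ([(Agen,false)] ++ epow 0 m ++ [(Agen,true)]) [(Egen 1,false)].
Proof. pose proof (bs_hnn m (rfun m xi) [1]) as H.
  unfold xword, xw_aux, phiword, phw_aux in H. rewrite Z.mul_1_r, app_nil_r in H. exact H. Qed.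

Lemma xw_unit r k j : xw_aux r k (repeat 0 j ++ [1]) = [(Egen (k+j)%nat, false)] ++ epow 0 (- r (k+j)%nat).
Proof. revert k; induction j; intro k; simpl.
  - rewrite Nat.add_0_r, Z.mul_1_r, app_nil_r. auto.
  - rewrite Z.mul_0_r. simpl. rewrite IHj. rewrite Nat.add_succ_r. auto. Qed.
Lemma phw_unit k j : phw_aux k (repeat 0 j ++ [1]) = [(Egen (S (k+j)), false)].
Proof. revert k; induction j; intro k; simpl.
  - rewrite Nat.add_0_r. auto.
  - rewrite IHj. rewrite Nat.add_succ_r. auto. Qed.

Lemma rel_e m xi j : BSeq m xi ([(Agen,false); (Egen (S j),false)] ++ epow 0 (- rfun m xi (S j)) ++ [(Agen,true)])
  [(Egen (S (S j)),false)].
Proof. pose proof (bs_hnn m (rfun m xi) (0 :: repeat 0 j ++ [1])) as H.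
  unfold xword, phiword in H. rewrite xw_unit, phw_unit, Z.mul_0_r in H. simpl in H. exact H. Qed.


Definition cx (g h : G) : Prop := (gx g * (1 - p2 (gk h)) = gx h * (1 - p2 (gk g)))%R.

Lemma cx_refl g : cx g g. Proof. unfold cx. ring. Qed.
Lemma cx_one h : cx one h. Proof. unfold cx, one; simpl. rewrite p2_0. ring. Qed.
Lemma cx_mul g1 g2 h : cx g1 h -> cx g2 h -> cx (mul g1 g2) h.
Proof. unfold cx, mul; simpl. intros H1 H2. rewrite p2_add.
  transitivity (gx g1 * (1 - p2 (gk h)) + p2 (gk g1) * (gx g2 * (1 - p2 (gk h))))%R; [ring|].
  rewrite H1, H2. ring. Qed.
Lemma cx_inv g h : cx g h -> cx (inv g) h.
Proof. unfold cx, inv; simpl. intros H1. pose proof (p2_inv (gk g)).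
  transitivity (- p2 (- gk g) * (gx g * (1 - p2 (gk h))))%R; [ring|].
  rewrite H1. transitivity (gx h * (p2 (gk g) * p2 (- gk g) - p2 (- gk g)))%R; [ring|]. rewrite H. ring. Qed.
Lemma cx_of_comm g h : mul g h = mul h g -> cx g h.
Proof. intro E. apply (f_equal gx) in E. unfold mul, cx in *; simpl in *. lra. Qed.

Lemma cx_L1 X g1 g2 : p2 (gk X) <> 1%R -> cx g1 X -> cx g2 X -> cx g1 g2.
Proof. unfold cx. intros Hs H1 H2. apply (Rmult_eq_reg_r (1 - p2 (gk X))); [|lra].
  transitivity ((gx g1 * (1 - p2 (gk X))) * (1 - p2 (gk g2)))%R; [ring|].
  rewrite H1. transitivity ((gx g2 * (1 - p2 (gk X))) * (1 - p2 (gk g1)))%R; [|ring].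
  rewrite H2. ring. Qed.
Lemma cx_L2 X g1 g2 : p2 (gk X) <> 1%R -> cx g1 X -> cx g2 X -> gk g1 = gk g2 -> gx g1 = gx g2.
Proof. unfold cx. intros Hs H1 H2 E. rewrite E in H1. apply (Rmult_eq_reg_r (1 - p2 (gk X))); [|lra]. lra. Qed.

Definition ea : letter := (Agen, false).
Definition eai : letter := (Agen, true).
Definition ee (i : nat) : letter := (Egen i, false).

Lemma H_comm m xi f (hf : is_aut m xi f) i j :
  mul (Hf m xi f [ee i]) (Hf m xi f [ee j]) = mul (Hf m xi f [ee j]) (Hf m xi f [ee i]).
Proof. rewrite <- !H_app by auto. apply H_wd; auto. apply bs_comm. Qed.

Lemma H_e1 m xi f (hf : is_aut m xi f) :
  mul (Hf m xi f [ea]) (mul (Hf m xi f (epow 0 m)) (inv (Hf m xi f [ea]))) = Hf m xi f [ee 1].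
Proof. transitivity (Hf m xi f ([ea] ++ epow 0 m ++ [eai])).
  2:{ apply H_wd; auto. apply rel_e1. }
  rewrite !H_app by auto. change eai with (linv ea). rewrite H_linv by auto. auto. Qed.

Lemma step1 m (hm : m <> 0) xi f (hf : is_aut m xi f) : gk (Hf m xi f [ee 0]) = 0.
Proof.
  set (X := Hf m xi f [ee 0]).
  destruct (Z.eq_dec (gk X) 0) as [|Hb]; auto. exfalso.
  assert (Hs : p2 (gk X) <> 1%R) by (intro E; apply p2_eq1 in E; auto).
  set (Zm := Hf m xi f (epow 0 m)).
  assert (HZX : cx Zm X).
  { apply (H_ind m xi f hf (fun g => cx g X)); [apply cx_one|intros; apply cx_mul; auto|].
    intros l Hl. apply in_epow in Hl. destruct l as [g b]; simpl in Hl; subst g. destruct b.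
    - change (Egen 0, true) with (linv (ee 0)). rewrite H_linv by auto. apply cx_inv, cx_refl.
    - apply cx_refl. }
  assert (HkZ : gk Zm = m * gk X) by (apply gk_H_epow; auto).
  set (A := Hf m xi f [ea]). set (Y := Hf m xi f [ee 1]).
  assert (HYX : cx Y X) by (apply cx_of_comm, H_comm; auto).
  assert (E1 : mul A (mul Zm (inv A)) = Y) by (apply H_e1; auto).
  assert (HkY : gk Y = gk Zm) by (rewrite <- E1; simpl; ring).
  assert (HxY : gx Y = gx Zm) by (apply (cx_L2 X); auto).
  assert (E2 : mul A Zm = mul Y A).
  { rewrite <- E1. rewrite <- !mul_assoc, mul_inv_l, mul_1_r. auto. }
  assert (HAZ : cx A Zm).
  { apply (f_equal gx) in E2. unfold mul, cx in *; simpl in *. rewrite HxY, HkY in E2. lra. }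
  assert (Hall : forall w, cx (Hf m xi f w) Zm).
  { intro w. apply (H_ind_pos m xi f hf (fun g => cx g Zm)); [apply cx_one|intros; apply cx_mul; auto|intros; apply cx_inv; auto|].
    intros g _. destruct g as [i|].
    - apply (cx_L1 X); auto. apply cx_of_comm. apply (H_comm m xi f hf i 0).
    - exact HAZ. }
  destruct (aut_surj _ _ _ hf [ee 0]) as [w Hw].
  specialize (Hall w). unfold Hf in Hall. rewrite (Pi_wd _ _ _ _ Hw) in Hall.
  unfold Pi, cx in Hall. simpl in Hall. rewrite p2_0 in Hall.
  assert (E3 : p2 (gk Zm) = 1%R) by (unfold pure in Hall; simpl in Hall; lra).
  apply p2_eq1 in E3. rewrite HkZ in E3. apply Z.mul_eq_0 in E3. tauto.
Qed.


Lemma Pi_letter m xi l : Pi m xi [l] = img m (rfun m xi) l.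
Proof. unfold Pi; simpl. apply mul_1_r. Qed.

Lemma H_rel m xi f (hf : is_aut m xi f) j :
  Hf m xi f [ee (S (S j))] =
  mul (Hf m xi f [ea]) (mul (Hf m xi f [ee (S j)]) (mul (Hf m xi f (epow 0 (- rfun m xi (S j)))) (inv (Hf m xi f [ea])))).
Proof. transitivity (Hf m xi f ([ea] ++ [ee (S j)] ++ epow 0 (- rfun m xi (S j)) ++ [eai])).
  { symmetry. apply H_wd; auto. apply rel_e. }
  rewrite !H_app by auto. change eai with (linv ea). rewrite H_linv by auto. auto. Qed.

Lemma gk_He m (hm : m <> 0) xi f (hf : is_aut m xi f) i : gk (Hf m xi f [ee i]) = 0.
Proof. induction i as [|i IH].
  - apply step1; auto.
  - destruct i as [|j].
    + rewrite <- H_e1 by auto. simpl. rewrite gk_H_epow by auto. rewrite step1 by auto. ring.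
    + rewrite H_rel by auto. simpl. rewrite gk_H_epow by auto. rewrite step1 by auto. rewrite IH. ring.
Qed.

Lemma chi m (hm : m <> 0) xi f (hf : is_aut m xi f) w :
  gk (Hf m xi f w) = gk (Hf m xi f [ea]) * gk (Pi m xi w).
Proof. induction w as [|l w IH].
  - rewrite H_nil by auto. simpl. ring.
  - rewrite H_cons by auto. unfold Pi in *. simpl. rewrite IH.
    assert (gk (Hf m xi f [l]) = gk (Hf m xi f [ea]) * gk (img m (rfun m xi) l)).
    { destruct l as [g b]. destruct b.
      - change (g, true) with (linv (g,false)). rewrite H_linv by auto. unfold img; simpl.
        destruct g as [n|]; simpl.
        + change [(Egen n, false)] with [ee n]. rewrite gk_He by auto. ring.
        + change [(Agen, false)] with [ea]. ring.
      - unfold img; simpl. destruct g as [n|]; simpl.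
        + change [(Egen n, false)] with [ee n]. rewrite gk_He by auto. ring.
        + change [(Agen, false)] with [ea]. ring. }
    rewrite H. ring.
Qed.

Lemma c_pm1 m (hm : m <> 0) xi f (hf : is_aut m xi f) :
  gk (Hf m xi f [ea]) = 1 \/ gk (Hf m xi f [ea]) = -1.
Proof. destruct (aut_surj _ _ _ hf [ea]) as [w Hw].
  pose proof (chi m hm xi f hf w) as E. unfold Hf in E. rewrite (Pi_wd _ _ _ _ Hw) in E.
  rewrite Pi_letter in E. simpl in E. symmetry in E. apply Z.eq_mul_1 in E. auto. Qed.

Lemma tw_eq m xi f (hf : is_aut m xi f) gam del : twisted_conj m xi f gam del ->
  exists g, Pi m xi del = mul (Pi m xi g) (mul (Pi m xi gam) (inv (Hf m xi f g))).
Proof. intros [g Hg]. exists g. rewrite (Pi_wd _ _ _ _ Hg). rewrite !Pi_app.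
  unfold Pi at 3. rewrite ev_winv. auto. Qed.

Lemma pick (P : nat -> word) (T : word -> word -> Prop) :
  (forall d, exists B, forall N, (B <= N)%nat -> ~ T (P N) d) ->
  forall L, exists gam, forall d, In d L -> ~ T gam d.
Proof. intros HB L.
  assert (exists B, forall N, (B <= N)%nat -> forall d, In d L -> ~ T (P N) d) as [B HB'].
  { induction L as [|d L [B IH]].
    - exists 0%nat. intros N _ d [].
    - destruct (HB d) as [B0 H0]. exists (Nat.max B B0). intros N HN d' [<-|Hin].
      + apply H0. lia.
      + apply IH; auto. lia. }
  exists (P B). intros d Hd. apply (HB' B); auto. Qed.

Lemma Pi_repa m xi n : gk (Pi m xi (repeat ea n)) = Z.of_nat n.
Proof. induction n; cbn [repeat]; unfold Pi in *; [reflexivity|]. cbn [ev gk mul]. rewrite IHn, Nat2Z.inj_succ. change (gk (img m (rfun m xi) ea)) with 1. lia. Qed.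

Lemma case_plus m (hm : m <> 0) xi f (hf : is_aut m xi f) (hc : gk (Hf m xi f [ea]) = 1) :
  forall L, exists gam, forall d, In d L -> ~ twisted_conj m xi f gam d.
Proof. apply (pick (fun N => repeat ea N)). intro d.
  exists (S (Z.to_nat (gk (Pi m xi d)))). intros N HN Ht.
  destruct (tw_eq m xi f hf _ _ Ht) as [g Hg].
  apply (f_equal gk) in Hg. simpl in Hg. rewrite chi, hc, Pi_repa in Hg by auto. lia. Qed.


Definition sig (u1 u2 b1 b2 : Z) (g : G) : G :=
  mkG 0 (u1 * gy g + u2 * gz g + (b1 * Sa (gk g) - b2 * Sb (gk g)))
        (u2 * gy g - u1 * gz g + (b1 * Sb (gk g) + b2 * Sa (gk g))) (- gk g).
Definition q (g : G) := mkG 0 (gy g) (gz g) (gk g).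

Lemma q_mul g h : q (mul g h) = mul (q g) (q h).
Proof. unfold q, mul; apply G_ext; simpl; ring. Qed.
Lemma q_one : q one = one. Proof. reflexivity. Qed.
Lemma sig_mul u1 u2 b1 b2 g h : sig u1 u2 b1 b2 (mul g h) = mul (sig u1 u2 b1 b2 g) (sig u1 u2 b1 b2 h).
Proof. unfold sig, mul; apply G_ext; cbn [gx gy gz gk].
  - ring.
  - unfold roty, rotz. rewrite c4_opp, s4_opp, Sa_add, Sb_add. ring.
  - unfold roty, rotz. rewrite c4_opp, s4_opp, Sa_add, Sb_add. ring.
  - ring. Qed.
Lemma sig_one u1 u2 b1 b2 : sig u1 u2 b1 b2 one = one.
Proof. unfold sig, one; apply G_ext; cbn [gx gy gz gk]; rewrite ?Sa_0, ?Sb_0; ring. Qed.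
Lemma hom_inv (phi : G -> G) : (forall g h, phi (mul g h) = mul (phi g) (phi h)) -> phi one = one ->
  forall g, phi (inv g) = inv (phi g).
Proof. intros Hm H1 g. apply inv_unique. rewrite <- Hm, mul_inv_r. auto. Qed.
Lemma sig_q u1 u2 b1 b2 g : sig u1 u2 b1 b2 (q g) = sig u1 u2 b1 b2 g.
Proof. reflexivity. Qed.


Definition SG m xi f := sig (gy (Hf m xi f [ee 0])) (gz (Hf m xi f [ee 0])) (gy (Hf m xi f [ea])) (gz (Hf m xi f [ea])).
Definition agreeL m xi f (l : letter) := q (Hf m xi f [l]) = SG m xi f (img m (rfun m xi) l).

Lemma agree_word m xi f (hf : is_aut m xi f) w : (forall l, In l w -> agreeL m xi f l) ->
  q (Hf m xi f w) = SG m xi f (Pi m xi w).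
Proof. induction w as [|l w IH]; intro Hl.
  - rewrite H_nil by auto. unfold Pi; simpl. rewrite q_one. unfold SG. rewrite sig_one. auto.
  - rewrite H_cons by auto. unfold Pi in *. cbn [ev]. rewrite q_mul. unfold SG in *. rewrite sig_mul.
    rewrite IH by (intros; apply Hl; right; auto). f_equal. apply Hl. left; auto. Qed.

Lemma agree_neg m xi f (hf : is_aut m xi f) g : agreeL m xi f (g,false) -> agreeL m xi f (g,true).
Proof. unfold agreeL. intro H. change (g, true) with (linv (g, false)). rewrite H_linv by auto.
  rewrite (hom_inv q q_mul q_one), H. unfold SG.
  rewrite img_linv. rewrite (hom_inv _ (sig_mul _ _ _ _) (sig_one _ _ _ _)).
  auto. Qed.

Lemma agree_a m xi f (hc : gk (Hf m xi f [ea]) = -1) : agreeL m xi f ea.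
Proof. unfold agreeL, SG, sig, q. apply G_ext; cbn [gx gy gz gk img gimg ea fst snd];
  rewrite ?Sa_1, ?Sb_1; try ring. rewrite hc. ring. Qed.

Lemma agree_e0 m (hm : m <> 0) xi f (hf : is_aut m xi f) : agreeL m xi f (ee 0).
Proof. unfold agreeL, SG, sig, q. pose proof (step1 m hm xi f hf) as H0.
  apply G_ext; cbn [gx gy gz gk img gimg ee fst snd pure PP e3 ta tb tc]; rewrite ?Z.opp_0, ?Sa_0, ?Sb_0; try ring.
  rewrite H0; ring. Qed.

Lemma agree_all_letters m xi f (hf : is_aut m xi f) w :
  (forall g, agreeL m xi f (g, false)) -> forall l, In l w -> agreeL m xi f l.
Proof. intros H [g b] _. destruct b; [apply agree_neg; auto| auto]. Qed.

Lemma agree_gen m (hm : m <> 0) xi f (hf : is_aut m xi f) (hc : gk (Hf m xi f [ea]) = -1) :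
  forall g, agreeL m xi f (g, false).
Proof.
  assert (Ha := agree_a m xi f hc). assert (H0 := agree_e0 m hm xi f hf).
  assert (Hep : forall n l, In l (epow 0 n) -> agreeL m xi f l).
  { intros n [g b] Hl. apply in_epow in Hl. simpl in Hl. subst. destruct b; [apply agree_neg; auto|auto]. }
  intros [i|]; [|exact Ha].
  induction i as [|i IH]; [exact H0|].
  assert (Hw : forall w, BSeq m xi w [ee (S i)] -> (forall l, In l w -> agreeL m xi f l) -> agreeL m xi f (ee (S i))).
  { intros w Hb Hl. unfold agreeL. rewrite <- Pi_letter. rewrite <- (Pi_wd _ _ _ _ Hb).
    rewrite <- (H_wd m xi f hf _ _ Hb). apply agree_word; auto. }
  destruct i as [|j].
  - apply (Hw ([ea] ++ epow 0 m ++ [eai])); [apply rel_e1|].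
    intros l Hl. apply in_app_or in Hl. destruct Hl as [[<-|[]]|Hl]; auto.
    apply in_app_or in Hl. destruct Hl as [Hl|[<-|[]]]; [eapply Hep; eauto|]. apply agree_neg; auto.
  - apply (Hw ([ea; ee (S j)] ++ epow 0 (- rfun m xi (S j)) ++ [eai])); [apply rel_e|].
    intros l Hl. apply in_app_or in Hl. destruct Hl as [[<-|[<-|[]]]|Hl]; auto.
    apply in_app_or in Hl. destruct Hl as [Hl|[<-|[]]]; [eapply Hep; eauto|]. apply agree_neg; auto.
Qed.

Lemma agree_all m (hm : m <> 0) xi f (hf : is_aut m xi f) (hc : gk (Hf m xi f [ea]) = -1) w :
  q (Hf m xi f w) = SG m xi f (Pi m xi w).
Proof. apply agree_word; auto. apply agree_all_letters; auto. apply agree_gen; auto. Qed.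


Lemma coord u1 u2 b1 b2 N1 N2 h : u1*u1+u2*u2 = 1 ->
  mkG 0 N2 (2*N2) 0 = mul h (mul (mkG 0 N1 (2*N1) 0) (inv (sig u1 u2 b1 b2 h))) -> N1 = N2.
Proof. intros Hu E. destruct h as [hx hy hz hk].
  assert (Hk : hk = 0) by (apply (f_equal gk) in E; cbn in E; lia). subst hk.
  pose proof (f_equal gy E) as Ey. pose proof (f_equal gz E) as Ez.
  unfold mul, inv, sig in Ey, Ez. cbn [gx gy gz gk] in Ey, Ez.
  rewrite ?Z.opp_involutive, ?Z.opp_0, ?Z.add_0_r, ?roty_0, ?rotz_0, ?Sa_0, ?Sb_0 in Ey.
  rewrite ?Z.opp_involutive, ?Z.opp_0, ?Z.add_0_r, ?roty_0, ?rotz_0, ?Sa_0, ?Sb_0 in Ez.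
  assert (u1 = 0 \/ u1 = 1 \/ u1 = -1) as Hc by nia.
  destruct Hc as [ Hc | [ Hc | Hc ] ]; subst u1.
  - assert (u2 = 1 \/ u2 = -1) as [ Hd | Hd ] by nia; subst u2; rewrite ?roty_0, ?rotz_0 in Ey; rewrite ?roty_0, ?rotz_0 in Ez; lia.
  - assert (u2 = 0) by nia; subst u2; rewrite ?roty_0, ?rotz_0 in Ey; rewrite ?roty_0, ?rotz_0 in Ez; lia.
  - assert (u2 = 0) by nia; subst u2; rewrite ?roty_0, ?rotz_0 in Ey; rewrite ?roty_0, ?rotz_0 in Ez; lia.
Qed.

Lemma unit_u m (hm : m <> 0) xi f (hf : is_aut m xi f) (hc : gk (Hf m xi f [ea]) = -1) :
  gy (Hf m xi f [ee 0]) * gy (Hf m xi f [ee 0]) + gz (Hf m xi f [ee 0]) * gz (Hf m xi f [ee 0]) = 1.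
Proof. destruct (aut_surj _ _ _ hf [ee 0]) as [w Hw].
  pose proof (agree_all m hm xi f hf hc w) as E.
  unfold Hf in E at 1. rewrite (Pi_wd _ _ _ _ Hw), Pi_letter in E.
  unfold SG in E. set (u1 := gy (Hf m xi f [ee 0])) in *. set (u2 := gz (Hf m xi f [ee 0])) in *.
  set (b1 := gy (Hf m xi f [ea])) in *. set (b2 := gz (Hf m xi f [ea])) in *.
  set (p := Pi m xi w) in *.
  pose proof (f_equal gk E) as Ek. pose proof (f_equal gy E) as Ey. pose proof (f_equal gz E) as Ez.
  clearbody u1 u2 b1 b2 p. clear E.
  cbn [q sig gk gy gz img gimg ee fst snd pure PP e3 ta tb tc] in Ek, Ey, Ez.
  assert (Hk : gk p = 0) by lia. rewrite Hk, Sa_0, Sb_0 in Ey, Ez.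
  set (y := gy p) in *. set (z := gz p) in *. clearbody y z.
  assert (A1 : u1*y + u2*z = 1) by lia. assert (A2 : u2*y - u1*z = 0) by lia.
  assert (E2 : (u1*u1 + u2*u2) * (y*y + z*z) = 1).
  { replace ((u1*u1+u2*u2)*(y*y+z*z)) with ((u1*y+u2*z)*(u1*y+u2*z) + (u2*y-u1*z)*(u2*y-u1*z)) by ring.
    rewrite A1, A2. reflexivity. }
  apply Z.eq_mul_1_nonneg in E2; [tauto|].
  pose proof (Z.square_nonneg u1). pose proof (Z.square_nonneg u2). lia.
Qed.

Definition gam (N : nat) : word := repeat (ee 0) N ++ [ea] ++ repeat (ee 0) (2*N) ++ [eai].

Lemma q_gam m xi N : q (Pi m xi (gam N)) = mkG 0 (Z.of_nat N) (2 * Z.of_nat N) 0.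
Proof. unfold gam, Pi. rewrite ev_app.
  replace (ev m (rfun m xi) (repeat (ee 0) N)) with (pure (tsc (Z.of_nat N) (PP m (rfun m xi) 0)))
    by (symmetry; apply ev_rep_pos).
  replace (ev m (rfun m xi) ([ea] ++ repeat (ee 0) (2*N) ++ [eai]))
    with (pure (tmul (tsc (Z.of_nat (2*N)) (PP m (rfun m xi) 0))))
    by (symmetry; apply ev_conj; apply ev_rep_pos).
  rewrite pure_mul. change (PP m (rfun m xi) 0) with e3.
  unfold q, pure; apply G_ext; cbn [gx gy gz gk tadd tsc tmul e3 ta tb tc]; auto; rewrite ?Nat2Z.inj_mul; simpl Z.of_nat; ring.
Qed.

Lemma grp1 a b c d : mul a (mul b (inv c)) = d -> b = mul (mul (inv a) d) c.
Proof. intro H. rewrite <- H. rewrite !mul_assoc, mul_inv_l, mul_1_l, <- mul_assoc, mul_inv_l, mul_1_r. auto. Qed.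

Lemma inv_tw m (hm : m <> 0) xi f (hf : is_aut m xi f) (hc : gk (Hf m xi f [ea]) = -1) N1 N2 d :
  twisted_conj m xi f (gam N1) d -> twisted_conj m xi f (gam N2) d -> N1 = N2.
Proof. intros T1 T2.
  destruct (tw_eq m xi f hf _ _ T1) as [g1 E1]. destruct (tw_eq m xi f hf _ _ T2) as [g2 E2].
  apply (f_equal q) in E1. apply (f_equal q) in E2.
  rewrite !q_mul, (hom_inv q q_mul q_one), agree_all, q_gam in E1, E2 by auto.
  pose proof (unit_u m hm xi f hf hc) as Hu.
  unfold SG in *. set (S := sig (gy (Hf m xi f [ee 0])) (gz (Hf m xi f [ee 0])) (gy (Hf m xi f [ea])) (gz (Hf m xi f [ea]))) in *.
  change (S (Pi m xi g1)) with (S (q (Pi m xi g1))) in E1.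
  change (S (Pi m xi g2)) with (S (q (Pi m xi g2))) in E2.

  set (a1 := q (Pi m xi g1)) in *. set (a2 := q (Pi m xi g2)) in *.
  rewrite E1 in E2. symmetry in E2. apply grp1 in E2.
  assert (HS : forall g h, S (mul g h) = mul (S g) (S h)) by (intros; apply sig_mul).
  assert (HS1 : S one = one) by apply sig_one.
  assert (E3 : mkG 0 (Z.of_nat N2) (2 * Z.of_nat N2) 0 =
     mul (mul (inv a2) a1) (mul (mkG 0 (Z.of_nat N1) (2 * Z.of_nat N1) 0) (inv (S (mul (inv a2) a1))))).
  { rewrite E2. rewrite HS, (hom_inv S HS HS1), inv_mul, inv_inv. rewrite !mul_assoc. auto. }
  apply (coord _ _ _ _ _ _ _ Hu) in E3. lia.
Qed.

Lemma case_minus m (hm : m <> 0) xi f (hf : is_aut m xi f) (hc : gk (Hf m xi f [ea]) = -1) :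
  forall L, exists gam0, forall d, In d L -> ~ twisted_conj m xi f gam0 d.
Proof. apply (pick gam). intro d.
  destruct (classic (exists N0, twisted_conj m xi f (gam N0) d)) as [[N0 H0]|Hno].
  - exists (S N0). intros N HN Ht. pose proof (inv_tw m hm xi f hf hc _ _ _ H0 Ht). lia.
  - exists 0%nat. intros N _ Ht. apply Hno. eauto.
Qed.

Theorem corollary5p3 (m : Z) (hm : m <> 0%Z) (xi : Zadic m) (f : word -> word)
  (hf : is_aut m xi f) :
  forall L : list word, exists gamma : word,
    forall delta : word, In delta L -> ~ twisted_conj m xi f gamma delta.
Proof. destruct (c_pm1 m hm xi f hf) as [hc|hc].
  - apply case_plus; auto.
  - apply case_minus; auto.
Qed.
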